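(* Let $k$ be a positive integer. Suppose that $h:\mathbb{H}\to\mathbb{C}$ is holomorphic, $M\in\mathrm{SL}_2(\mathbb{R})$ is elliptic of infinite order, and $\zeta\in\mathbb{C}^\times$ is a root of unity such that $h|M=\zeta h$. Then $h=0$.
   Context: $\mathbb{H}$ is the upper half-plane. For $\gamma=\begin{pmatrix}a&b\\c&d\end{pmatrix}\in\mathrm{GL}_2^+(\mathbb{R})$, $h|\gamma(z)=(\det\gamma)^{k/2}(cz+d)^{-k}h\big(\frac{az+b}{cz+d}\big)$. *)

(* Defs.v *)
From Stdlib Require Import Reals.
From Coquelicot Require Import Coquelicot.

Record mat2 : Type := Mat2 { ma : R; mb : R; mc : R; md : R }.

Definition mat2_det (g : mat2) : R := (ma g * md g - mb g * mc g)%R.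
Definition mat2_tr (g : mat2) : R := (ma g + md g)%R.
Definition mat2_id : mat2 := Mat2 1 0 0 1.
Definition mat2_mul (g h : mat2) : mat2 :=
  Mat2 (ma g * ma h + mb g * mc h)%R (ma g * mb h + mb g * md h)%R
       (mc g * ma h + md g * mc h)%R (mc g * mb h + md g * md h)%R.
Fixpoint mat2_pow (g : mat2) (n : nat) : mat2 :=
  match n with O => mat2_id | S n => mat2_mul g (mat2_pow g n) end.

Definition in_SL2R (g : mat2) : Prop := mat2_det g = 1%R.
Definition elliptic (g : mat2) : Prop := (Rabs (mat2_tr g) < 2)%R.
Definition infinite_order (g : mat2) : Prop :=
  forall n : nat, (0 < n)%nat -> mat2_pow g n <> mat2_id.

Definition in_H (z : C) : Prop := (0 < Im z)%R.

Definition holomorphic_on_H (h : C -> C) : Prop :=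
  forall z : C, in_H z -> @ex_derive C_AbsRing C_NormedModule h z.

Definition mobius (g : mat2) (z : C) : C :=
  Cdiv (Cplus (Cmult (RtoC (ma g)) z) (RtoC (mb g)))
       (Cplus (Cmult (RtoC (mc g)) z) (RtoC (md g))).

Definition slash (k : nat) (h : C -> C) (g : mat2) (z : C) : C :=
  Cmult (Cmult (RtoC (Rpower (mat2_det g) (INR k / 2)))
               (Cinv (pow_n (Cplus (Cmult (RtoC (mc g)) z) (RtoC (md g))) k)))
        (h (mobius g z)).

Definition root_of_unity (zeta : C) : Prop :=
  exists n : nat, (0 < n)%nat /\ pow_n zeta n = RtoC 1.

(* Main.v *)
Require Import Defs.
From Stdlib Require Import Reals Lra Lia Psatz ZArith Classical.
From Coquelicot Require Import Coquelicot.
Open Scope R_scope.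

Lemma Cmod_le_sum (z : C) : Cmod z <= Rabs (fst z) + Rabs (snd z).
Proof.
  destruct z as [a b]; unfold Cmod; simpl.
  rewrite <- (sqrt_Rsqr (Rabs a + Rabs b)) by (pose proof (Rabs_pos a); pose proof (Rabs_pos b); lra).
  apply sqrt_le_1_alt. unfold Rsqr.
  pose proof (Rabs_pos a); pose proof (Rabs_pos b).
  replace (a*(a*1)) with (Rabs a * Rabs a) by (rewrite <- Rabs_mult; rewrite Rabs_right; [ring| nra]).
  replace (b*(b*1)) with (Rabs b * Rabs b) by (rewrite <- Rabs_mult; rewrite Rabs_right; [ring| nra]).
  nra.
Qed.

Lemma Re_le_Cmod (z : C) : Rabs (fst z) <= Cmod z.
Proof. apply re_le_Cmod. Qed.

Lemma Im_le_Cmod (z : C) : Rabs (snd z) <= Cmod z.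
Proof.
  destruct z as [a b]; unfold Cmod; simpl.
  rewrite <- sqrt_Rsqr_abs. apply sqrt_le_1_alt. unfold Rsqr. nra.
Qed.

Definition CD (f : C -> C) (z l : C) : Prop :=
  forall eps, 0 < eps -> exists del, 0 < del /\
    forall k : C, Cmod k < del -> Cmod (f (z + k) - f z - l * k)%C <= eps * Cmod k.

Lemma is_derive_CD (f : C -> C) (z l : C) :
  @is_derive C_AbsRing C_NormedModule f z l -> CD f z l.
Proof.
  intros [_ H] eps Heps.
  specialize (H z (fun P HP => HP) (mkposreal eps Heps)).
  apply (@locally_le_locally_norm C_AbsRing (AbsRing_NormedModule C_AbsRing) z) in H.
  destruct H as [d Hd].
  exists d; split; [apply cond_pos|].
  intros k Hk.
  specialize (Hd (z + k)%C).
  assert (Hk' : Cmod (z + k - z)%C < d) by (replace (z + k - z)%C with k by ring; exact Hk).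
  pose proof (@norm_compat1 C_AbsRing (AbsRing_NormedModule C_AbsRing) z (z+k)%C d Hk') as B.
  specialize (Hd B).
  unfold norm, minus, scal, plus, opp in Hd; simpl in Hd.
  replace (z + k + - z)%C with k in Hd by ring.
  change (mult k l) with (k * l)%C in Hd. change (abs k) with (Cmod k) in Hd.
  replace (f (z + k)%C - f z - l * k)%C with (f (z + k)%C + - f z + - (k * l))%C by ring.
  exact Hd.
Qed.

Lemma CD_is_derive (f : C -> C) (z l : C) :
  CD f z l -> @is_derive C_AbsRing C_NormedModule f z l.
Proof.
  intros H. split; [apply is_linear_scal_l|].
  intros x Hx. apply (@is_filter_lim_locally_unique C_AbsRing (AbsRing_NormedModule C_AbsRing)) in Hx. subst x.
  intros eps. apply (@locally_norm_le_locally C_AbsRing (AbsRing_NormedModule C_AbsRing) z).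
  destruct (H eps (cond_pos eps)) as [d [Hd H']].
  exists (mkposreal d Hd). intros y Hy. unfold ball_norm in Hy.
  unfold norm, minus, scal, plus, opp in Hy |- *; simpl in Hy |- *.
  change (abs (y + - z)%C) with (Cmod (y + - z)%C) in Hy |- *.
  change C in y. set (k := (y + - z)%C) in *.
  assert (Ey : y = (z + k)%C) by (unfold k; ring).
  change (mult k l) with (k * l)%C.
  replace (f y + - f z + - (k * l))%C with (f (z + k) - f z - l * k)%C by (rewrite <- Ey; ring).
  apply H'. exact Hy.
Qed.

Definition PD (p : R -> C) (x : R) (l : C) : Prop :=
  forall eps, 0 < eps -> exists del, 0 < del /\
    forall h : R, Rabs h < del -> Cmod (p (Rplus x h) - p x - RtoC h * l)%C <= eps * Rabs h.

Lemma div_small (A h eps : R) : h <> 0 -> 0 < eps -> Rabs A <= eps / 2 * Rabs h -> Rabs (A / h) < eps.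
Proof.
  intros Hh He HA. unfold Rdiv; rewrite Rabs_mult, Rabs_inv.
  pose proof (Rabs_pos_lt h Hh).
  apply (Rmult_lt_reg_r (Rabs h)); auto.
  rewrite Rmult_assoc, Rinv_l by lra. nra.
Qed.

Lemma PD_real (p : R -> C) (x : R) (l : C) :
  PD p x l -> derivable_pt_lim (fun t => fst (p t)) x (fst l) /\
              derivable_pt_lim (fun t => snd (p t)) x (snd l).
Proof.
  intros H; split; intros eps Heps;
  destruct (H (eps/2) ltac:(lra)) as [d [Hd H']];
  exists (mkposreal d Hd); intros h Hh0 Hh; simpl in Hh;
  specialize (H' h Hh).
  - pose proof (Re_le_Cmod (p (Rplus x h) - p x - RtoC h * l)%C) as B.
    destruct (p (x+h)) as [a1 a2]; destruct (p x) as [b1 b2]; destruct l as [l1 l2].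
    simpl in B |- *.
    replace ((a1 - b1) / h - l1) with ((a1 + - b1 + - (h * l1 - 0 * l2)) / h) by (field; auto).
    apply div_small; auto; lra.
  - pose proof (Im_le_Cmod (p (Rplus x h) - p x - RtoC h * l)%C) as B.
    destruct (p (x+h)) as [a1 a2]; destruct (p x) as [b1 b2]; destruct l as [l1 l2].
    simpl in B |- *.
    replace ((a2 - b2) / h - l2) with ((a2 + - b2 + - (h * l2 + 0 * l1)) / h) by (field; auto).
    apply div_small; auto; lra.
Qed.

Lemma real_PD (p : R -> C) (x : R) (l : C) :
  derivable_pt_lim (fun t => fst (p t)) x (fst l) ->
  derivable_pt_lim (fun t => snd (p t)) x (snd l) -> PD p x l.
Proof.
  intros H1 H2 eps Heps.
  destruct (H1 (eps/2) ltac:(lra)) as [d1 Hd1].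
  destruct (H2 (eps/2) ltac:(lra)) as [d2 Hd2].
  exists (Rmin d1 d2); split; [apply Rmin_pos; apply cond_pos|].
  intros h Hh.
  destruct (Req_dec h 0) as [->|Hh0].
  { rewrite Rplus_0_r. replace (p x - p x - RtoC 0 * l)%C with (RtoC 0) by ring.
    rewrite Cmod_0, Rabs_R0; lra. }
  assert (h1 : Rabs h < d1) by (eapply Rlt_le_trans; [exact Hh|apply Rmin_l]).
  assert (h2 : Rabs h < d2) by (eapply Rlt_le_trans; [exact Hh|apply Rmin_r]).
  specialize (Hd1 h Hh0 h1). specialize (Hd2 h Hh0 h2).
  eapply Rle_trans; [apply Cmod_le_sum|].
  destruct (p (x+h)) as [a1 a2]; destruct (p x) as [b1 b2]; destruct l as [l1 l2].
  simpl in Hd1, Hd2 |- *.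
  replace ((a1 - b1) / h - l1) with ((a1 + - b1 + - (h * l1 - 0 * l2)) / h) in Hd1 by (field; auto).
  replace ((a2 - b2) / h - l2) with ((a2 + - b2 + - (h * l2 + 0 * l1)) / h) in Hd2 by (field; auto).
  unfold Rdiv in Hd1, Hd2; rewrite Rabs_mult, Rabs_inv in Hd1, Hd2.
  pose proof (Rabs_pos_lt h Hh0).
  apply (Rmult_lt_compat_r (Rabs h)) in Hd1; auto.
  apply (Rmult_lt_compat_r (Rabs h)) in Hd2; auto.
  rewrite Rmult_assoc, Rinv_l in Hd1, Hd2 by lra.
  lra.
Qed.

Lemma PD_const (p : R -> C) (a b : R) :
  a < b -> (forall t, a <= t <= b -> PD p t (RtoC 0)) -> p a = p b.
Proof.
  intros Hab H.
  assert (E1 : fst (p a) = fst (p b)).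
  { apply (@eq_is_derive R_NormedModule (fun t => fst (p t))); auto.
    intros t Ht. apply is_derive_Reals. apply (PD_real _ _ _ (H t Ht)). }
  assert (E2 : snd (p a) = snd (p b)).
  { apply (@eq_is_derive R_NormedModule (fun t => snd (p t))); auto.
    intros t Ht. apply is_derive_Reals. apply (PD_real _ _ _ (H t Ht)). }
  destruct (p a), (p b); simpl in *; subst; auto.
Qed.

Lemma PD_mult (p q : R -> C) (x : R) (lp lq : C) :
  PD p x lp -> PD q x lq -> PD (fun t => p t * q t)%C x (lp * q x + p x * lq)%C.
Proof.
  intros Hp Hq.
  destruct (PD_real _ _ _ Hp) as [P1 P2].
  destruct (PD_real _ _ _ Hq) as [Q1 Q2].
  apply real_PD; simpl.
  - apply derivable_pt_lim_ext with (f := ((fun t => fst (p t)) * (fun t => fst (q t)) - (fun t => snd (p t)) * (fun t => snd (q t)))%F).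
    { intros t; reflexivity. }
    replace (fst lp * fst (q x) - snd lp * snd (q x) + (fst (p x) * fst lq - snd (p x) * snd lq))
      with ((fst lp * fst (q x) + fst (p x) * fst lq) - (snd lp * snd (q x) + snd (p x) * snd lq)) by ring.
    apply derivable_pt_lim_minus; apply derivable_pt_lim_mult; auto.
  - apply derivable_pt_lim_ext with (f := ((fun t => fst (p t)) * (fun t => snd (q t)) + (fun t => snd (p t)) * (fun t => fst (q t)))%F).
    { intros t; reflexivity. }
    replace (fst lp * snd (q x) + snd lp * fst (q x) + (fst (p x) * snd lq + snd (p x) * fst lq))
      with ((fst lp * snd (q x) + fst (p x) * snd lq) + (snd lp * fst (q x) + snd (p x) * fst lq)) by ring.
    apply derivable_pt_lim_plus; apply derivable_pt_lim_mult; auto.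
Qed.

Lemma Cmod_RtoC_mult (h : R) (z : C) : Cmod (RtoC h * z)%C = Rabs h * Cmod z.
Proof. rewrite Cmod_mult, Cmod_R. reflexivity. Qed.

Lemma PD_comp (f : C -> C) (p : R -> C) (x : R) (fl pl : C) :
  CD f (p x) fl -> PD p x pl -> PD (fun t => f (p t)) x (fl * pl)%C.
Proof.
  intros Hf Hp eps Heps.
  set (A := Cmod pl + 1). set (B := Cmod fl + 1).
  assert (HA : 0 < A) by (unfold A; pose proof (Cmod_ge_0 pl); lra).
  assert (HB : 0 < B) by (unfold B; pose proof (Cmod_ge_0 fl); lra).
  destruct (Hp 1 ltac:(lra)) as [d1 [Hd1 H1]].
  destruct (Hf (eps / (2 * A))) as [d2 [Hd2 H2]].
  { apply Rdiv_lt_0_compat; lra. }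
  destruct (Hp (eps / (2 * B))) as [d3 [Hd3 H3]].
  { apply Rdiv_lt_0_compat; lra. }
  exists (Rmin d1 (Rmin (d2 / A) d3)).
  split. { apply Rmin_pos; auto. apply Rmin_pos; auto. apply Rdiv_lt_0_compat; lra. }
  intros h Hh.
  assert (h1 : Rabs h < d1) by (eapply Rlt_le_trans; [exact Hh|apply Rmin_l]).
  assert (h2 : Rabs h < d2 / A) by (eapply Rlt_le_trans; [exact Hh|eapply Rle_trans; [apply Rmin_r|apply Rmin_l]]).
  assert (h3 : Rabs h < d3) by (eapply Rlt_le_trans; [exact Hh|eapply Rle_trans; [apply Rmin_r|apply Rmin_r]]).
  specialize (H1 h h1). specialize (H3 h h3).
  set (k := (p (Rplus x h) - p x)%C).
  assert (Hk : Cmod k <= A * Rabs h).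
  { replace k with ((p (Rplus x h) - p x - RtoC h * pl) + RtoC h * pl)%C by (unfold k; ring).
    eapply Rle_trans; [apply Cmod_triangle|]. rewrite Cmod_RtoC_mult. unfold A.
    pose proof (Rabs_pos h). nra. }
  assert (Hk2 : Cmod k < d2).
  { apply (Rmult_lt_compat_l A) in h2; auto.
    replace (A * (d2 / A)) with d2 in h2 by (field; lra). lra. }
  specialize (H2 k Hk2).
  replace (p x + k)%C with (p (Rplus x h)) in H2 by (unfold k; ring).
  replace (f (p (Rplus x h)) - f (p x) - RtoC h * (fl * pl))%C
    with ((f (p (Rplus x h)) - f (p x) - fl * k) + fl * (p (Rplus x h) - p x - RtoC h * pl))%C
    by (unfold k; ring).
  eapply Rle_trans; [apply Cmod_triangle|]. rewrite Cmod_mult.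
  assert (T1 : eps / (2 * A) * Cmod k <= eps / 2 * Rabs h).
  { replace (eps / 2 * Rabs h) with (eps / (2 * A) * (A * Rabs h)) by (field; lra).
    apply Rmult_le_compat_l; auto. apply Rlt_le, Rdiv_lt_0_compat; lra. }
  assert (T2 : Cmod fl * Cmod (p (Rplus x h) - p x - RtoC h * pl)%C <= eps / 2 * Rabs h).
  { eapply Rle_trans. apply Rmult_le_compat_l; [apply Cmod_ge_0| exact H3].
    replace (eps / 2 * Rabs h) with (B * (eps / (2 * B) * Rabs h)) by (field; lra).
    apply Rmult_le_compat_r. apply Rmult_le_pos; [apply Rlt_le, Rdiv_lt_0_compat; lra| apply Rabs_pos].
    unfold B; lra. }
  lra.
Qed.

Lemma CD_bound (f : C -> C) (z l : C) : CD f z l ->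
  exists del, 0 < del /\ forall k, Cmod k < del -> Cmod (f (z + k)%C - f z) <= (Cmod l + 1) * Cmod k.
Proof.
  intros H. destruct (H 1 ltac:(lra)) as [d [Hd H']]. exists d; split; auto.
  intros k Hk. specialize (H' k Hk).
  replace (f (z + k)%C - f z)%C with ((f (z + k) - f z - l * k) + l * k)%C by ring.
  eapply Rle_trans; [apply Cmod_triangle|]. rewrite Cmod_mult. lra.
Qed.

Lemma CD_inv (z : C) : z <> RtoC 0 -> CD Cinv z (- / (z * z))%C.
Proof.
  intros Hz eps Heps.
  assert (Hm : 0 < Cmod z) by (apply Cmod_gt_0; auto).
  exists (Rmin (Cmod z / 2) (eps * (Cmod z * Cmod z * Cmod z) / 2)).
  split. { apply Rmin_pos. lra. apply Rdiv_lt_0_compat; [|lra]. assert (0 < Cmod z * Cmod z * Cmod z) by (repeat apply Rmult_lt_0_compat; auto). nra. }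
  intros k Hk.
  assert (k1 : Cmod k < Cmod z / 2) by (eapply Rlt_le_trans; [exact Hk|apply Rmin_l]).
  assert (k2 : Cmod k < eps * (Cmod z * Cmod z * Cmod z) / 2) by (eapply Rlt_le_trans; [exact Hk|apply Rmin_r]).
  assert (Hzk : Cmod z / 2 <= Cmod (z + k)%C).
  { pose proof (Cmod_triangle (z + k)%C (- k)%C). rewrite Cmod_opp in H.
    replace (z + k + - k)%C with z in H by ring. lra. }
  assert (Hzk0 : (z + k)%C <> RtoC 0) by (intro E; rewrite E, Cmod_0 in Hzk; lra).
  replace (/ (z + k) - / z - - / (z * z) * k)%C with (k * k / (z * z * (z + k)))%C by (field; auto).
  unfold Cdiv. rewrite Cmod_mult, Cmod_mult, Cmod_inv, !Cmod_mult.
  2:{ apply Cmult_neq_0; auto. apply Cmult_neq_0; auto. }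
  pose proof (Cmod_ge_0 k).
  assert (Hp : 0 < Cmod z * Cmod z * Cmod (z + k)%C) by (apply Rmult_lt_0_compat; [apply Rmult_lt_0_compat|]; lra).
  apply (Rmult_le_reg_r (Cmod z * Cmod z * Cmod (z + k)%C)); auto.
  rewrite Rmult_assoc, Rinv_l by lra. rewrite Rmult_1_r.
  assert (Cmod k * Cmod k <= Cmod k * (eps * (Cmod z * Cmod z * Cmod z) / 2)) by (apply Rmult_le_compat_l; lra).
  assert (eps * (Cmod z * Cmod z * Cmod z) / 2 <= eps * (Cmod z * Cmod z * Cmod (z+k)%C)).
  { assert (Cmod z * Cmod z * Cmod z / 2 <= Cmod z * Cmod z * Cmod (z+k)%C).
    { replace (Cmod z * Cmod z * Cmod z / 2) with (Cmod z * Cmod z * (Cmod z / 2)) by field.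
      apply Rmult_le_compat_l; auto. nra. }
    nra. }
  nra.
Qed.

Ltac cring := match goal with |- ?a = ?b => change (@eq C a b) end; ring.
Ltac cfield := match goal with |- ?a = ?b => change (@eq C a b) end; field.

Definition E (x : R) : C := (cos x, sin x).

Lemma pow_n_S (z : C) (n : nat) : pow_n z (S n) = (z * pow_n z n)%C.
Proof. reflexivity. Qed.
Lemma pow_n_O (z : C) : pow_n z 0 = RtoC 1.
Proof. reflexivity. Qed.

Lemma Cmod_E (x : R) : Cmod (E x) = 1.
Proof.
  unfold Cmod, E; simpl. pose proof (sin2_cos2 x) as H. unfold Rsqr in H.
  replace (cos x * (cos x * 1) + sin x * (sin x * 1)) with 1 by lra. apply sqrt_1.
Qed.

Lemma E_add (x y : R) : E (x + y) = (E x * E y)%C.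
Proof.
  unfold E, Cmult; simpl. rewrite cos_plus, sin_plus. f_equal; ring.
Qed.

Lemma E_0 : E 0 = RtoC 1.
Proof. unfold E. rewrite cos_0, sin_0. reflexivity. Qed.

Lemma E_2PI : E (2 * PI) = RtoC 1.
Proof. unfold E. rewrite cos_2PI, sin_2PI. reflexivity. Qed.

Lemma E_neq0 (x : R) : E x <> RtoC 0.
Proof. intro H. pose proof (Cmod_E x). rewrite H, Cmod_0 in H0. lra. Qed.

Lemma E_opp (x : R) : E (- x) = Cinv (E x).
Proof.
  assert (H : (E (- x) * E x)%C = RtoC 1) by (rewrite <- E_add, Rplus_opp_l; apply E_0).
  pose proof (E_neq0 x).
  replace (E (-x)) with (E (-x) * E x * / E x)%C by (field; auto).
  rewrite H. field; auto.
Qed.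

Lemma E_pow (x : R) (n : nat) : pow_n (E x) n = E (INR n * x).
Proof.
  induction n.
  - simpl. rewrite Rmult_0_l, E_0. reflexivity.
  - rewrite pow_n_S, IHn, <- E_add. f_equal. rewrite S_INR. ring.
Qed.

Lemma Cmod_pow_n (z : C) (n : nat) : Cmod (pow_n z n) = Cmod z ^ n.
Proof.
  induction n. simpl. unfold Cmod; simpl. replace (1 * (1 * 1) + 0 * (0 * 1)) with 1 by ring. apply sqrt_1.
  rewrite pow_n_S, Cmod_mult, IHn. simpl. ring.
Qed.

Lemma pow_n_add (z : C) (n m : nat) : pow_n z (n + m) = (pow_n z n * pow_n z m)%C.
Proof.
  induction n. rewrite pow_n_O. change (0 + m)%nat with m. symmetry. apply Cmult_1_l.
  change (S n + m)%nat with (S (n + m)). rewrite !pow_n_S, IHn. cring.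
Qed.

Lemma pow_n_mul (z : C) (n m : nat) : pow_n z (n * m) = pow_n (pow_n z n) m.
Proof.
  induction m. rewrite Nat.mul_0_r. reflexivity.
  replace (n * S m)%nat with (n + n * m)%nat by lia.
  rewrite pow_n_add, IHm, pow_n_S. reflexivity.
Qed.

Lemma pow_n_mult_distr (a b : C) (n : nat) : pow_n (a * b)%C n = (pow_n a n * pow_n b n)%C.
Proof.
  induction n. rewrite !pow_n_O. symmetry. apply Cmult_1_l.
  rewrite !pow_n_S, IHn. cring.
Qed.

Lemma pow_n_neq0 (z : C) (n : nat) : z <> RtoC 0 -> pow_n z n <> RtoC 0.
Proof.
  intros Hz. induction n. rewrite pow_n_O. apply C1_nz.
  rewrite pow_n_S. apply Cmult_neq_0; auto.
Qed.

Lemma pow_n_inv (z : C) (n : nat) : z <> RtoC 0 -> pow_n (Cinv z) n = Cinv (pow_n z n).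
Proof.
  intros Hz. induction n. rewrite !pow_n_O. cfield.
  rewrite !pow_n_S, IHn. cfield. split; auto. apply pow_n_neq0; auto.
Qed.

Lemma E_IZR_2PI (m : Z) : E (IZR m * (2 * PI)) = RtoC 1.
Proof.
  assert (Hn : forall n : nat, E (INR n * (2 * PI)) = RtoC 1).
  { intros n. rewrite <- E_pow, E_2PI. induction n. reflexivity. rewrite pow_n_S, IHn. cring. }
  destruct (Z_le_gt_dec 0 m).
  - rewrite <- (Z2Nat.id m) by lia. rewrite <- INR_IZR_INZ. apply Hn.
  - replace (IZR m * (2 * PI)) with (- (INR (Z.to_nat (- m)) * (2 * PI))).
    rewrite E_opp, Hn. field.
    rewrite INR_IZR_INZ, Z2Nat.id by lia. rewrite opp_IZR. ring.
Qed.

Lemma cos_eq_1_int (a : R) : cos (2 * PI * a) = 1 -> exists m : Z, a = IZR m.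
Proof.
  intros H.
  replace (2 * PI * a) with (2 * (PI * a)) in H by ring.
  rewrite cos_2a_sin in H.
  assert (sin (PI * a) = 0) by nra.
  destruct (sin_eq_0_0 _ H0) as [m Hm]. exists m.
  pose proof PI_RGT_0.
  apply (Rmult_eq_reg_l PI); [|lra]. rewrite Hm. ring.
Qed.

Lemma E_near1 (g : R) : Cmod (E g - RtoC 1)%C <= 2 * Rabs g.
Proof.
  eapply Rle_trans; [apply Cmod_le_sum|]. simpl.
  assert (H1 : Rabs (sin g - sin 0) <= 1 * Rabs (g - 0)).
  { apply (bounded_variation sin cos). intros t _. split.
    apply is_derive_Reals, derivable_pt_lim_sin. apply Rabs_le, COS_bound. }
  assert (H2 : Rabs (cos g - cos 0) <= 1 * Rabs (g - 0)).
  { apply (bounded_variation cos (fun t => - sin t)). intros t _. split.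
    apply is_derive_Reals, derivable_pt_lim_cos. rewrite Rabs_Ropp. apply Rabs_le, SIN_bound. }
  rewrite sin_0, cos_0, Rminus_0_r in *.
  replace (g - 0) with g in H1 by ring. change (Rabs (cos g - 1) + Rabs (sin g - 0) <= 2 * Rabs g). change (Rabs (cos g - 1) <= 1 * Rabs g) in H2. rewrite Rminus_0_r. lra.
Qed.

Lemma unit_E (u : C) : Cmod u = 1 -> exists th, u = E th.
Proof.
  destruct u as [u1 u2]. unfold Cmod; simpl. intros H.
  assert (Hs : u1 * u1 + u2 * u2 = 1).
  { apply (f_equal (fun x => x * x)) in H. rewrite sqrt_sqrt in H by nra. nra. }
  assert (Hb : -1 <= u1 <= 1) by nra.
  destruct (Rle_dec 0 u2).
  - exists (acos u1). unfold E. rewrite cos_acos, sin_acos; auto. f_equal.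
    rewrite <- (sqrt_Rsqr u2) by auto. f_equal. unfold Rsqr. lra.
  - exists (- acos u1). unfold E. rewrite cos_neg, sin_neg, cos_acos, sin_acos; auto. f_equal. unfold Rsqr.
    replace (1 - u1 * u1) with (Rsqr (- u2)) by (unfold Rsqr; lra). rewrite sqrt_Rsqr by lra. ring.
Qed.

Lemma PD_Ecomp (c : R) (t : R) : PD (fun s => E (c * s)) t (RtoC c * Ci * E (c * t))%C.
Proof.
  apply real_PD; simpl.
  - apply is_derive_Reals. auto_derive; auto. ring.
  - apply is_derive_Reals. auto_derive; auto. ring.
Qed.

Lemma PD_Rexp (b : R) (t : R) : PD (fun s => RtoC (exp (b * s))) t (RtoC (b * exp (b * t))).
Proof.
  apply real_PD; simpl.
  - apply is_derive_Reals. auto_derive; auto. ring.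
  - apply is_derive_Reals. auto_derive; auto.
Qed.

Lemma php (K : nat) : forall f : nat -> nat, (forall j, (j <= K)%nat -> (f j < K)%nat) ->
  exists i j, (i < j <= K)%nat /\ f i = f j.
Proof.
  induction K; intros f Hf.
  - specialize (Hf 0%nat (le_n 0)). lia.
  - set (v := f (S K)).
    destruct (classic (exists j, (j <= K)%nat /\ f j = v)) as [[j [Hj Ej]]|Hn].
    + exists j, (S K). split; [lia|]. auto.
    + set (g := fun j => if (f j <? v)%nat then f j else (f j - 1)%nat).
      assert (Hv : (v < S K)%nat) by (apply Hf; lia).
      destruct (IHK g) as [i [j [Hij Eg]]].
      { intros j Hj. unfold g. assert (f j <> v) by (intro; apply Hn; exists j; auto).
        specialize (Hf j ltac:(lia)).
        destruct (Nat.ltb_spec (f j) v); lia. }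
      exists i, j. split; [lia|].
      assert (f i <> v) by (intro; apply Hn; exists i; split; auto; lia).
      assert (f j <> v) by (intro; apply Hn; exists j; split; auto; lia).
      unfold g in Eg.
      destruct (Nat.ltb_spec (f i) v); destruct (Nat.ltb_spec (f j) v); lia.
Qed.

Lemma up_spec (r : R) : IZR (up r) - 1 <= r < IZR (up r).
Proof. destruct (archimed r). lra. Qed.

Lemma density (b : R) : (forall n, (0 < n)%nat -> E (INR n * b) <> RtoC 1) ->
  forall del, 0 < del -> exists n, (0 < n)%nat /\ E (INR n * b) <> RtoC 1 /\ Cmod (E (INR n * b) - RtoC 1)%C < del.
Proof.
  intros Hb del Hd.
  pose proof PI_RGT_0 as HPI.
  destruct (INR_archimed del (4 * PI) Hd) as [K0 HK0].
  set (K := S K0).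
  assert (HK : INR K * del > 4 * PI) by (unfold K; rewrite S_INR; nra).
  assert (HKpos : 0 < INR K) by (unfold K; apply lt_0_INR; lia).
  set (y := fun j : nat => INR j * b / (2 * PI)).
  set (x := fun j : nat => y j - (IZR (up (y j)) - 1)).
  assert (Hx : forall j, 0 <= x j < 1).
  { intros j. unfold x. pose proof (up_spec (y j)). lra. }
  set (f := fun j : nat => (Z.to_nat (up (INR K * x j)) - 1)%nat).
  assert (Hf : forall j, INR (f j) <= INR K * x j < INR (f j) + 1 /\ (f j < K)%nat).
  { intros j. pose proof (up_spec (INR K * x j)) as [U1 U2]. specialize (Hx j).
    assert (Hu0 : (1 <= up (INR K * x j))%Z).
    { assert (0 <= INR K * x j) by nra. assert (0 < up (INR K * x j))%Z by (apply lt_IZR; lra). lia. }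
    assert (Hu1 : (up (INR K * x j) <= Z.of_nat K)%Z).
    { assert (INR K * x j < INR K) by nra.
      assert (up (INR K * x j) < Z.of_nat K + 1)%Z by (apply lt_IZR; rewrite plus_IZR, <- INR_IZR_INZ; lra). lia. }
    unfold f.
    assert (E1 : INR (Z.to_nat (up (INR K * x j)) - 1) = IZR (up (INR K * x j)) - 1).
    { rewrite minus_INR by lia. rewrite INR_IZR_INZ, Z2Nat.id by lia. simpl. ring. }
    rewrite E1. split; [lra|lia]. }
  destruct (php K f (fun j _ => proj2 (Hf j))) as [i [j [Hij Efij]]].
  exists (j - i)%nat. split; [lia|].
  assert (Hdx : Rabs (x j - x i) < 1 / INR K).
  { destruct (Hf i) as [[Fi1 Fi2] _]. destruct (Hf j) as [[Fj1 Fj2] _].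
    rewrite Efij in Fi1, Fi2.
    apply Rabs_def1; apply (Rmult_lt_reg_l (INR K)); auto; field_simplify; try lra; nra. }
  assert (Eang : INR (j - i) * b = 2 * PI * (x j - x i) + IZR (up (y j) - up (y i)) * (2 * PI)).
  { unfold x, y. rewrite minus_IZR, minus_INR by lia. field. lra. }
  assert (EE : E (INR (j - i) * b) = E (2 * PI * (x j - x i))) by (rewrite Eang, E_add, E_IZR_2PI, Cmult_1_r; reflexivity).
  rewrite EE.
  split.
  - rewrite <- EE. apply Hb. lia.
  - eapply Rle_lt_trans; [apply E_near1|].
    rewrite Rabs_mult, (Rabs_right (2 * PI)) by lra.
    assert (2 * (2 * PI * Rabs (x j - x i)) < 2 * (2 * PI * (1 / INR K))) by (apply Rmult_lt_compat_l; [lra|]; apply Rmult_lt_compat_l; lra).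
    assert (2 * (2 * PI * (1 / INR K)) < del).
    { apply (Rmult_lt_reg_l (INR K)); auto. field_simplify; lra. }
    lra.
Qed.

Lemma Cmod_small_zero (A : C) : (forall eta, 0 < eta -> Cmod A <= eta) -> A = RtoC 0.
Proof.
  intros H. apply Cmod_eq_0. pose proof (Cmod_ge_0 A).
  destruct (Req_dec (Cmod A) 0); auto.
  specialize (H (Cmod A / 2) ltac:(lra)). lra.
Qed.

Lemma iterate (F : C -> C) (beta gamma : R)
  (H1 : forall w, Cmod w < 1 -> F (E beta * w)%C = (E gamma * F w)%C) :
  forall n w, Cmod w < 1 -> F (E (INR n * beta) * w)%C = (E (INR n * gamma) * F w)%C.
Proof.
  induction n; intros w Hw.
  - simpl. rewrite !Rmult_0_l, E_0, !Cmult_1_l. reflexivity.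
  - rewrite S_INR, !Rmult_plus_distr_r, !Rmult_1_l.
    rewrite (Rplus_comm _ beta), (Rplus_comm _ gamma), !E_add.
    replace (E beta * E (INR n * beta) * w)%C with (E beta * (E (INR n * beta) * w))%C by ring.
    rewrite H1. rewrite IHn; auto. ring.
    rewrite Cmod_mult, Cmod_E. lra.
Qed.

Lemma cross (F Fd : C -> C) (beta gamma : R)
  (HD : forall w, Cmod w < 1 -> CD F w (Fd w))
  (H1 : forall w, Cmod w < 1 -> F (E beta * w)%C = (E gamma * F w)%C)
  (H2 : forall n, (0 < n)%nat -> E (INR n * beta) <> RtoC 1) :
  forall w w1, Cmod w < 1 -> Cmod w1 < 1 ->
    (w * Fd w * F w1)%C = (w1 * Fd w1 * F w)%C.
Proof.
  intros w w1 Hw Hw1.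
  apply Ceq_minus. apply Cmod_small_zero. intros eta Heta.
  set (Cst := Cmod w * Cmod (F w1) + Cmod w1 * Cmod (F w) + 1).
  assert (HC : 0 < Cst).
  { unfold Cst. pose proof (Cmod_ge_0 w); pose proof (Cmod_ge_0 w1);
    pose proof (Cmod_ge_0 (F w)); pose proof (Cmod_ge_0 (F w1)). nra. }
  set (eps := eta / Cst).
  assert (He : 0 < eps) by (apply Rdiv_lt_0_compat; auto).
  destruct (HD w Hw eps He) as [d1 [Hd1 D1]].
  destruct (HD w1 Hw1 eps He) as [d2 [Hd2 D2]].
  destruct (density beta H2 (Rmin d1 d2) ltac:(apply Rmin_pos; auto)) as [n [Hn [Hs1 Hs2]]].
  set (s := E (INR n * beta)) in *.
  set (tau := E (INR n * gamma)).
  assert (Hsm : 0 < Cmod (s - 1)%C) by (apply Cmod_gt_0; intro X; apply Hs1; apply Ceq_minus; auto).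
  assert (K1 : Cmod ((s - 1) * w)%C < d1).
  { rewrite Cmod_mult. eapply Rle_lt_trans with (Cmod (s-1)%C * 1).
    apply Rmult_le_compat_l; [apply Cmod_ge_0|lra].
    rewrite Rmult_1_r. eapply Rlt_le_trans; [exact Hs2|apply Rmin_l]. }
  assert (K2 : Cmod ((s - 1) * w1)%C < d2).
  { rewrite Cmod_mult. eapply Rle_lt_trans with (Cmod (s-1)%C * 1).
    apply Rmult_le_compat_l; [apply Cmod_ge_0|lra].
    rewrite Rmult_1_r. eapply Rlt_le_trans; [exact Hs2|apply Rmin_r]. }
  specialize (D1 _ K1). specialize (D2 _ K2).
  replace (w + (s - 1) * w)%C with (s * w)%C in D1 by ring.
  replace (w1 + (s - 1) * w1)%C with (s * w1)%C in D2 by ring.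
  unfold s in D1, D2. rewrite (iterate F beta gamma H1) in D1, D2 by auto.
  fold s tau in D1, D2.
  set (e1 := (tau * F w - F w - Fd w * ((s - 1) * w))%C) in *.
  set (e2 := (tau * F w1 - F w1 - Fd w1 * ((s - 1) * w1))%C) in *.
  assert (Id : ((s - 1) * (w * Fd w * F w1 - w1 * Fd w1 * F w))%C = (e2 * F w - e1 * F w1)%C).
  { unfold e1, e2. ring. }
  assert (B : Cmod (s - 1)%C * Cmod (w * Fd w * F w1 - w1 * Fd w1 * F w)%C
              <= Cmod (s - 1)%C * (eps * Cst)).
  { rewrite <- Cmod_mult, Id.
    eapply Rle_trans; [apply Cmod_triangle|]. rewrite Cmod_opp, !Cmod_mult.
    rewrite !Cmod_mult in D1, D2.
    pose proof (Cmod_ge_0 (F w)); pose proof (Cmod_ge_0 (F w1)).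
    pose proof (Cmod_ge_0 w); pose proof (Cmod_ge_0 w1).
    assert (Cmod e2 * Cmod (F w) <= eps * (Cmod (s - 1)%C * Cmod w1) * Cmod (F w)) by (apply Rmult_le_compat_r; auto).
    assert (Cmod e1 * Cmod (F w1) <= eps * (Cmod (s - 1)%C * Cmod w) * Cmod (F w1)) by (apply Rmult_le_compat_r; auto).
    unfold Cst. nra. }
  apply Rmult_le_reg_l in B; auto.
  unfold eps in B. replace (eta / Cst * Cst) with eta in B by (field; lra). exact B.
Qed.

Ltac cproj := apply injective_projections; simpl; ring.

Lemma Cmult_reg_r (a b c : C) : c <> RtoC 0 -> (a * c)%C = (b * c)%C -> a = b.
Proof.
  intros Hc H. replace a with (a * c * / c)%C by (field; auto).
  rewrite H. field; auto.
Qed.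

Lemma Cmult_reg_l (a b c : C) : c <> RtoC 0 -> (c * a)%C = (c * b)%C -> a = b.
Proof.
  intros Hc H. apply (Cmult_reg_r a b c Hc). rewrite (Cmult_comm a), (Cmult_comm b). auto.
Qed.

Lemma pow_le_1' (x : R) (k : nat) : 0 <= x <= 1 -> x ^ k <= 1.
Proof.
  intros Hx. induction k. simpl; lra. simpl.
  pose proof (pow_le x k (proj1 Hx)). nra.
Qed.

Lemma PD_E (t : R) : PD E t (Ci * E t)%C.
Proof.
  apply real_PD; simpl.
  - replace (0 * cos t - 1 * sin t) with (- sin t) by ring. apply derivable_pt_lim_cos.
  - replace (0 * sin t + 1 * cos t) with (cos t) by ring. apply derivable_pt_lim_sin.
Qed.

Lemma PD_cst (a : C) (t : R) : PD (fun _ => a) t (RtoC 0).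
Proof.
  intros eps Heps. exists 1. split; [lra|]. intros h _.
  replace (a - a - RtoC h * RtoC 0)%C with (RtoC 0) by ring. rewrite Cmod_0.
  pose proof (Rabs_pos h). nra.
Qed.

Lemma PD_id (t : R) : PD (fun r => RtoC r) t (RtoC 1).
Proof.
  apply real_PD; simpl.
  - apply derivable_pt_lim_id.
  - apply derivable_pt_lim_const.
Qed.

Lemma PD_Rpow (n : nat) (t : R) : PD (fun r => RtoC (r ^ n)) t (RtoC (INR n * t ^ pred n)).
Proof.
  apply real_PD; simpl.
  - apply derivable_pt_lim_pow.
  - apply derivable_pt_lim_const.
Qed.

Lemma CiL (L : C) : (Ci * L + RtoC (snd L) - RtoC (fst L) * Ci)%C = RtoC 0.
Proof. destruct L as [a b]. cproj. Qed.

Lemma core (F : C -> C) (beta gamma : R)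
  (HF : forall w, Cmod w < 1 -> @ex_derive C_AbsRing C_NormedModule F w)
  (H1 : forall w, Cmod w < 1 -> F (E beta * w)%C = (E gamma * F w)%C)
  (H2 : forall n, (0 < n)%nat -> E (INR n * beta) <> RtoC 1)
  (H3 : forall n : nat, E (INR n * beta) <> E gamma) :
  forall w, Cmod w < 1 -> F w = RtoC 0.
Proof.
  intros w1 Hw1. destruct (Ceq_dec (F w1) (RtoC 0)) as [|Hne]; auto. exfalso.
  set (Fd := C_derive F).
  assert (HD : forall w, Cmod w < 1 -> CD F w (Fd w)).
  { intros w Hw. apply is_derive_CD. apply C_derive_correct; auto. }
  set (L := (w1 * Fd w1 / F w1)%C).
  assert (Eul : forall w, Cmod w < 1 -> (w * Fd w)%C = (L * F w)%C).
  { intros w Hw. pose proof (cross F Fd beta gamma HD H1 H2 w w1 Hw Hw1) as X.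
    unfold L. apply (Cmult_reg_r _ _ (F w1)); auto.
    rewrite X. field. auto. }
  set (a := fst L). set (b := snd L).
  set (Q := fun t => (RtoC (exp (b * t)) * E (- a * t))%C).
  set (v := fun t => (F (E t * w1) * Q t)%C).
  assert (Hin : forall t, Cmod (E t * w1)%C < 1) by (intros t; rewrite Cmod_mult, Cmod_E; lra).
  assert (Hv : forall t, PD v t (RtoC 0)).
  { intros t.
    assert (P1 : PD (fun s => E s * w1)%C t (Ci * E t * w1 + E t * RtoC 0)%C)
      by (apply PD_mult; [apply PD_E|apply PD_cst]).
    assert (P2 := PD_comp F (fun s => E s * w1)%C t _ _ (HD _ (Hin t)) P1).
    assert (P3 : PD Q t (RtoC (b * exp (b * t)) * E (- a * t) + RtoC (exp (b * t)) * (RtoC (- a) * Ci * E (- a * t)))%C)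
      by (unfold Q; apply (PD_mult (fun s => RtoC (exp (b * s))) (fun s => E (- a * s))); [apply PD_Rexp|apply PD_Ecomp]).
    assert (P4 := PD_mult _ _ t _ _ P2 P3).
    replace (RtoC 0) with ((Fd (E t * w1)%C * (Ci * E t * w1 + E t * RtoC 0)) * Q t +
       F (E t * w1)%C * (RtoC (b * exp (b * t)) * E (- a * t) + RtoC (exp (b * t)) * (RtoC (- a) * Ci * E (- a * t))))%C.
    exact P4.
    replace (Fd (E t * w1)%C * (Ci * E t * w1 + E t * RtoC 0))%C with (Ci * ((E t * w1) * Fd (E t * w1)))%C by ring.
    rewrite Eul by auto.
    replace (RtoC (b * exp (b * t)) * E (- a * t) + RtoC (exp (b * t)) * (RtoC (- a) * Ci * E (- a * t)))%C
      with ((RtoC b - RtoC a * Ci) * Q t)%C by (unfold Q; rewrite RtoC_mult, RtoC_opp; ring).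
    transitivity ((Ci * L + RtoC b - RtoC a * Ci) * F (E t * w1)%C * Q t)%C; [ring|].
    unfold a, b. rewrite CiL. ring. }
  assert (vc : forall T, v T = v 0).
  { intros T. destruct (Rlt_le_dec 0 T).
    - symmetry. apply PD_const; auto.
    - destruct (Req_dec T 0) as [->|]; auto. apply PD_const; [lra|]. auto. }
  assert (v0 : v 0 = F w1).
  { unfold v, Q. rewrite !Rmult_0_r, exp_0, E_0. rewrite !Cmult_1_l, Cmult_1_r. reflexivity. }
  assert (Q2 : Q (2 * PI) = RtoC 1).
  { pose proof (vc (2 * PI)) as X. rewrite v0 in X. unfold v in X. rewrite E_2PI, Cmult_1_l in X.
    apply (Cmult_reg_l _ _ (F w1)); auto. rewrite X. ring. }
  assert (Hb : b = 0).
  { assert (X : Cmod (Q (2 * PI)) = 1) by (rewrite Q2; apply Cmod_1).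
    unfold Q in X. rewrite Cmod_mult, Cmod_E, Cmod_R, Rmult_1_r in X.
    rewrite Rabs_pos_eq in X by (apply Rlt_le, exp_pos).
    rewrite <- exp_0 in X. apply exp_inv in X. pose proof PI_RGT_0. nra. }
  assert (Ha : exists m : Z, a = IZR m).
  { apply cos_eq_1_int. unfold Q in Q2. rewrite Hb, Rmult_0_l, exp_0, Cmult_1_l in Q2.
    apply (f_equal fst) in Q2. simpl in Q2. rewrite <- cos_neg. rewrite <- Q2. f_equal. ring. }
  destruct Ha as [m Hm].
  assert (Eg : E gamma = E (a * beta)).
  { pose proof (vc beta) as X. rewrite v0 in X. unfold v in X. rewrite H1 in X by auto.
    unfold Q in X. rewrite Hb, Rmult_0_l, exp_0, Cmult_1_l in X.
    assert (E gamma * E (- a * beta) = RtoC 1)%C.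
    { apply (Cmult_reg_l _ _ (F w1)); auto. rewrite <- X at 2. ring. }
    replace (E (a * beta)) with (E gamma * E (- a * beta) * E (a * beta))%C.
    rewrite <- Cmult_assoc, <- E_add. replace (- a * beta + a * beta) with 0 by ring. rewrite E_0. ring.
    rewrite H. ring. }
  destruct (Z_le_gt_dec 0 m) as [Hm0|Hm0].
  - apply (H3 (Z.to_nat m)). rewrite Eg, Hm, INR_IZR_INZ, Z2Nat.id; auto.
  -
    set (n := Z.to_nat (- m)).
    assert (Hn : (0 < n)%nat) by (unfold n; lia).
    assert (HaN : a = - INR n) by (unfold n; rewrite Hm, INR_IZR_INZ, Z2Nat.id by lia; rewrite opp_IZR; ring).
    assert (HL : L = RtoC (- INR n)).
    { rewrite <- HaN. fold a. apply injective_projections; simpl; auto. }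
    set (G := fun r => (F (RtoC r * w1) * RtoC (r ^ n))%C).
    assert (HG : forall r, 0 < r <= 1 -> PD G r (RtoC 0)).
    { intros r Hr.
      assert (Hrw : Cmod (RtoC r * w1)%C < 1).
      { rewrite Cmod_mult, Cmod_R, Rabs_pos_eq by lra. pose proof (Cmod_ge_0 w1). nra. }
      assert (P1 : PD (fun s => RtoC s * w1)%C r (RtoC 1 * w1 + RtoC r * RtoC 0)%C)
        by (apply PD_mult; [apply PD_id|apply PD_cst]).
      assert (P2 := PD_comp F (fun s => RtoC s * w1)%C r _ _ (HD _ Hrw) P1).
      assert (P4 := PD_mult _ _ r _ _ P2 (PD_Rpow n r)).
      replace (RtoC 0) with ((Fd (RtoC r * w1)%C * (RtoC 1 * w1 + RtoC r * RtoC 0)) * RtoC (r ^ n) +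
         F (RtoC r * w1)%C * RtoC (INR n * r ^ pred n))%C.
      exact P4.
      assert (Er : r ^ n = r * r ^ pred n) by (destruct n; [lia|]; simpl; ring).
      rewrite Er, !RtoC_mult.
      transitivity (RtoC (r ^ pred n) * ((RtoC r * w1) * Fd (RtoC r * w1)%C + RtoC (INR n) * F (RtoC r * w1)%C))%C; [ring|].
      rewrite Eul by auto. rewrite HL, RtoC_opp. ring. }
    assert (Gc : forall r, 0 < r <= 1 -> G r = F w1).
    { intros r Hr. destruct (Req_dec r 1) as [->|Hr1].
      - unfold G. rewrite pow1, Cmult_1_l, Cmult_1_r. reflexivity.
      - transitivity (G 1).
        + apply PD_const; [lra|]. intros t Ht. apply HG. lra.
        + unfold G. rewrite pow1, Cmult_1_l, Cmult_1_r. reflexivity. }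
    destruct (CD_bound F 0 (Fd 0) (HD 0 ltac:(rewrite Cmod_0; lra))) as [d0 [Hd0 B0]].
    set (B := Cmod (F 0) + Cmod (Fd 0) + 1).
    assert (HB : 0 < B) by (unfold B; pose proof (Cmod_ge_0 (F 0)); pose proof (Cmod_ge_0 (Fd 0)); lra).
    assert (Hf1 : 0 < Cmod (F w1)) by (apply Cmod_gt_0; auto).
    set (r := Rmin (1/2) (Rmin (d0 / 2) (Cmod (F w1) / (2 * B)))).
    assert (Hr0 : 0 < r).
    { unfold r. apply Rmin_pos; [lra|]. apply Rmin_pos; [lra|]. apply Rdiv_lt_0_compat; lra. }
    assert (Hr1 : r <= 1/2) by apply Rmin_l.
    assert (Hr2 : r <= d0 / 2) by (eapply Rle_trans; [apply Rmin_r|apply Rmin_l]).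
    assert (Hr3 : r <= Cmod (F w1) / (2 * B)) by (eapply Rle_trans; [apply Rmin_r|apply Rmin_r]).
    assert (Hk : Cmod (RtoC r * w1)%C < d0).
    { rewrite Cmod_mult, Cmod_R, Rabs_pos_eq by lra. pose proof (Cmod_ge_0 w1). nra. }
    specialize (B0 _ Hk). replace (0 + RtoC r * w1)%C with (RtoC r * w1)%C in B0 by ring.
    assert (BF : Cmod (F (RtoC r * w1)%C) <= B).
    { pose proof (Cmod_triangle (F (RtoC r * w1)%C - F 0)%C (F 0)).
      replace (F (RtoC r * w1)%C - F 0 + F 0)%C with (F (RtoC r * w1)%C) in H by ring.
      rewrite Cmod_mult, Cmod_R, Rabs_pos_eq in B0 by lra.
      pose proof (Cmod_ge_0 w1). pose proof (Cmod_ge_0 (Fd 0)).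
      assert ((Cmod (Fd 0) + 1) * (r * Cmod w1) <= Cmod (Fd 0) + 1).
      { rewrite <- (Rmult_1_r (Cmod (Fd 0) + 1)) at 2. apply Rmult_le_compat_l; [lra|]. nra. }
      unfold B. lra. }
    assert (Hpow : r ^ n <= r).
    { rewrite <- (Nat.succ_pred_pos n Hn). rewrite <- tech_pow_Rmult.
      assert (r ^ pred n <= 1) by (apply pow_le_1'; lra). nra. }
    assert (X : G r = F w1) by (apply Gc; lra).
    unfold G in X. apply (f_equal Cmod) in X. rewrite Cmod_mult, Cmod_R, Rabs_pos_eq in X
      by (apply pow_le; lra).
    assert (Cmod (F (RtoC r * w1)%C) * r ^ n <= B * r).
    { apply Rmult_le_compat; auto. apply Cmod_ge_0. apply pow_le; lra. }
    assert (B * r <= Cmod (F w1) / 2).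
    { apply (Rmult_le_compat_l B) in Hr3; [|lra].
      replace (B * (Cmod (F w1) / (2 * B))) with (Cmod (F w1) / 2) in Hr3 by (field; lra). lra. }
    lra.
Qed.

Lemma CD_ext (f g : C -> C) (z l : C) : (forall y, f y = g y) -> CD f z l -> CD g z l.
Proof.
  intros E H eps He. destruct (H eps He) as [d [Hd H']]. exists d; split; auto.
  intros k Hk. rewrite <- !E. auto.
Qed.

Lemma CD_const (a z : C) : CD (fun _ => a) z (RtoC 0).
Proof.
  intros eps He. exists 1; split; [lra|]. intros k _.
  replace (a - a - RtoC 0 * k)%C with (RtoC 0) by ring. rewrite Cmod_0.
  pose proof (Cmod_ge_0 k). nra.
Qed.

Lemma CD_id (z : C) : CD (fun y => y) z (RtoC 1).
Proof.
  intros eps He. exists 1; split; [lra|]. intros k _.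
  replace (z + k - z - RtoC 1 * k)%C with (RtoC 0) by ring. rewrite Cmod_0.
  pose proof (Cmod_ge_0 k). nra.
Qed.

Lemma CD_plus (f g : C -> C) (z lf lg : C) : CD f z lf -> CD g z lg ->
  CD (fun y => f y + g y)%C z (lf + lg)%C.
Proof.
  intros Hf Hg eps He.
  destruct (Hf (eps/2) ltac:(lra)) as [d1 [Hd1 H1]].
  destruct (Hg (eps/2) ltac:(lra)) as [d2 [Hd2 H2]].
  exists (Rmin d1 d2); split; [apply Rmin_pos; auto|].
  intros k Hk.
  assert (k1 : Cmod k < d1) by (eapply Rlt_le_trans; [exact Hk|apply Rmin_l]).
  assert (k2 : Cmod k < d2) by (eapply Rlt_le_trans; [exact Hk|apply Rmin_r]).
  specialize (H1 k k1). specialize (H2 k k2).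
  replace (f (z + k) + g (z + k) - (f z + g z) - (lf + lg) * k)%C
    with ((f (z + k) - f z - lf * k) + (g (z + k) - g z - lg * k))%C by ring.
  eapply Rle_trans; [apply Cmod_triangle|]. lra.
Qed.

Lemma CD_scal (c : C) (f : C -> C) (z l : C) : CD f z l -> CD (fun y => c * f y)%C z (c * l)%C.
Proof.
  intros Hf eps He.
  destruct (Hf (eps / (Cmod c + 1))) as [d [Hd H]].
  { apply Rdiv_lt_0_compat; auto. pose proof (Cmod_ge_0 c); lra. }
  exists d; split; auto. intros k Hk. specialize (H k Hk).
  replace (c * f (z + k) - c * f z - c * l * k)%C with (c * (f (z + k) - f z - l * k))%C by ring.
  rewrite Cmod_mult.
  pose proof (Cmod_ge_0 c). pose proof (Cmod_ge_0 k).
  eapply Rle_trans. apply Rmult_le_compat_l; [lra|exact H].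
  replace (Cmod c * (eps / (Cmod c + 1) * Cmod k)) with (eps * Cmod k * (Cmod c / (Cmod c + 1))) by (field; lra).
  rewrite <- (Rmult_1_r (eps * Cmod k)) at 2. apply Rmult_le_compat_l. nra.
  apply (Rmult_le_reg_r (Cmod c + 1)); [lra|]. field_simplify; lra.
Qed.

Lemma CD_comp (f g : C -> C) (z lf lg : C) :
  CD g z lg -> CD f (g z) lf -> CD (fun y => f (g y)) z (lf * lg)%C.
Proof.
  intros Hg Hf eps Heps.
  set (A := Cmod lg + 1). set (B := Cmod lf + 1).
  assert (HA : 0 < A) by (unfold A; pose proof (Cmod_ge_0 lg); lra).
  assert (HB : 0 < B) by (unfold B; pose proof (Cmod_ge_0 lf); lra).
  destruct (CD_bound g z lg Hg) as [d1 [Hd1 H1]].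
  destruct (Hf (eps / (2 * A))) as [d2 [Hd2 H2]].
  { apply Rdiv_lt_0_compat; lra. }
  destruct (Hg (eps / (2 * B))) as [d3 [Hd3 H3]].
  { apply Rdiv_lt_0_compat; lra. }
  exists (Rmin d1 (Rmin (d2 / A) d3)).
  split. { apply Rmin_pos; auto. apply Rmin_pos; auto. apply Rdiv_lt_0_compat; lra. }
  intros h Hh.
  assert (h1 : Cmod h < d1) by (eapply Rlt_le_trans; [exact Hh|apply Rmin_l]).
  assert (h2 : Cmod h < d2 / A) by (eapply Rlt_le_trans; [exact Hh|eapply Rle_trans; [apply Rmin_r|apply Rmin_l]]).
  assert (h3 : Cmod h < d3) by (eapply Rlt_le_trans; [exact Hh|eapply Rle_trans; [apply Rmin_r|apply Rmin_r]]).
  specialize (H1 h h1). specialize (H3 h h3).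
  set (k := (g (z + h) - g z)%C) in *.
  assert (Hk2 : Cmod k < d2).
  { apply (Rmult_lt_compat_l A) in h2; auto.
    replace (A * (d2 / A)) with d2 in h2 by (field; lra). fold A in H1. lra. }
  specialize (H2 k Hk2).
  replace (g z + k)%C with (g (z + h)%C) in H2 by (unfold k; ring).
  replace (f (g (z + h)%C) - f (g z) - lf * lg * h)%C
    with ((f (g (z + h)%C) - f (g z) - lf * k) + lf * (g (z + h) - g z - lg * h))%C
    by (unfold k; ring).
  eapply Rle_trans; [apply Cmod_triangle|]. rewrite Cmod_mult.
  assert (T1 : eps / (2 * A) * Cmod k <= eps / 2 * Cmod h).
  { replace (eps / 2 * Cmod h) with (eps / (2 * A) * (A * Cmod h)) by (field; lra).
    apply Rmult_le_compat_l; auto. apply Rlt_le, Rdiv_lt_0_compat; lra. }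
  assert (T2 : Cmod lf * Cmod (g (z + h) - g z - lg * h)%C <= eps / 2 * Cmod h).
  { eapply Rle_trans. apply Rmult_le_compat_l; [apply Cmod_ge_0| exact H3].
    replace (eps / 2 * Cmod h) with (B * (eps / (2 * B) * Cmod h)) by (field; lra).
    apply Rmult_le_compat_r. apply Rmult_le_pos; [apply Rlt_le, Rdiv_lt_0_compat; lra| apply Cmod_ge_0].
    unfold B; lra. }
  lra.
Qed.

Lemma CD_mult (f g : C -> C) (z lf lg : C) : CD f z lf -> CD g z lg ->
  CD (fun y => f y * g y)%C z (lf * g z + f z * lg)%C.
Proof.
  intros Hf Hg eps He.
  set (Gb := Cmod (g z) + Cmod lg + 1).
  set (A := Cmod lf * (Cmod lg + 1) + Cmod (f z) + Gb + 1).
  assert (HG : 0 < Gb) by (unfold Gb; pose proof (Cmod_ge_0 (g z)); pose proof (Cmod_ge_0 lg); lra).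
  assert (HA : 0 < A) by (unfold A; pose proof (Cmod_ge_0 lf); pose proof (Cmod_ge_0 lg); pose proof (Cmod_ge_0 (f z)); nra).
  set (e := eps / A).
  assert (He' : 0 < e) by (apply Rdiv_lt_0_compat; auto).
  destruct (CD_bound g z lg Hg) as [d0 [Hd0 H0]].
  destruct (Hf e He') as [d1 [Hd1 H1]].
  destruct (Hg e He') as [d2 [Hd2 H2]].
  exists (Rmin (Rmin d0 1) (Rmin (Rmin d1 d2) e)).
  split. { repeat apply Rmin_pos; auto; lra. }
  intros k Hk.
  assert (k0 : Cmod k < d0) by (eapply Rlt_le_trans; [exact Hk|]; eapply Rle_trans; [apply Rmin_l|apply Rmin_l]).
  assert (k1' : Cmod k < 1) by (eapply Rlt_le_trans; [exact Hk|]; eapply Rle_trans; [apply Rmin_l|apply Rmin_r]).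
  assert (k1 : Cmod k < d1) by (eapply Rlt_le_trans; [exact Hk|]; eapply Rle_trans; [apply Rmin_r|]; eapply Rle_trans; [apply Rmin_l|apply Rmin_l]).
  assert (k2 : Cmod k < d2) by (eapply Rlt_le_trans; [exact Hk|]; eapply Rle_trans; [apply Rmin_r|]; eapply Rle_trans; [apply Rmin_l|apply Rmin_r]).
  assert (k3 : Cmod k < e) by (eapply Rlt_le_trans; [exact Hk|]; eapply Rle_trans; [apply Rmin_r|apply Rmin_r]).
  specialize (H0 k k0). specialize (H1 k k1). specialize (H2 k k2).
  pose proof (Cmod_ge_0 k) as Hk0.
  assert (Bg : Cmod (g (z + k)%C) <= Gb).
  { pose proof (Cmod_triangle (g (z + k)%C - g z)%C (g z)).
    replace (g (z + k)%C - g z + g z)%C with (g (z + k)%C) in H by ring.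
    unfold Gb. pose proof (Cmod_ge_0 lg). nra. }
  replace (f (z + k) * g (z + k) - f z * g z - (lf * g z + f z * lg) * k)%C
    with ((f (z + k) - f z - lf * k) * g (z + k) + lf * k * (g (z + k) - g z) + f z * (g (z + k) - g z - lg * k))%C by ring.
  eapply Rle_trans; [apply Cmod_triangle|].
  eapply Rle_trans; [apply Rplus_le_compat_r; apply Cmod_triangle|].
  rewrite !Cmod_mult.
  pose proof (Cmod_ge_0 lf). pose proof (Cmod_ge_0 (f z)). pose proof (Cmod_ge_0 lg).
  pose proof (Cmod_ge_0 (f (z + k) - f z - lf * k)%C).
  pose proof (Cmod_ge_0 (g (z + k) - g z - lg * k)%C).
  pose proof (Cmod_ge_0 (g (z + k) - g z)%C).
  assert (T1 : Cmod (f (z + k) - f z - lf * k)%C * Cmod (g (z + k)%C) <= e * Cmod k * Gb).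
  { apply Rmult_le_compat; auto. apply Cmod_ge_0. }
  assert (T2 : Cmod lf * Cmod k * Cmod (g (z + k) - g z)%C <= Cmod lf * Cmod k * ((Cmod lg + 1) * e)).
  { apply Rmult_le_compat_l. nra. eapply Rle_trans; [exact H0|]. apply Rmult_le_compat_l; lra. }
  assert (T3 : Cmod (f z) * Cmod (g (z + k) - g z - lg * k)%C <= Cmod (f z) * (e * Cmod k)).
  { apply Rmult_le_compat_l; auto. }
  assert (Sum : e * Cmod k * Gb + Cmod lf * Cmod k * ((Cmod lg + 1) * e) + Cmod (f z) * (e * Cmod k) <= eps * Cmod k).
  { replace eps with (e * A) by (unfold e; field; lra). unfold A. nra. }
  lra.
Qed.

Definition CDx (f : C -> C) (z : C) := exists l, CD f z l.

Lemma CDx_pow (f : C -> C) (z : C) (n : nat) : CDx f z -> CDx (fun y => pow_n (f y) n) z.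
Proof.
  intros Hf. induction n.
  - exists (RtoC 0). eapply CD_ext; [|apply (CD_const (RtoC 1) z)]. intros y; reflexivity.
  - destruct Hf as [l Hl]. destruct IHn as [l2 H2].
    eexists. eapply CD_ext; [|apply (CD_mult _ _ z _ _ Hl H2)]. intros y. reflexivity.
Qed.

Definition sq (a d : R) := sqrt (4 - (a + d) ^ 2).
Definition y0 (a c d : R) := sq a d / (2 * Rabs c).
Definition x0 (a c d : R) := (a - d) / (2 * c).
Definition z0 (a c d : R) : C := (x0 a c d, y0 a c d).
Definition z0b (a c d : R) : C := (x0 a c d, - y0 a c d).
Definition rho (a c d : R) : C := ((a + d) / 2, - c * y0 a c d).
Definition rhob (a c d : R) : C := ((a + d) / 2, c * y0 a c d).
Definition Zm (a c d : R) (w : C) : C := (z0b a c d + (z0 a c d - z0b a c d) / (RtoC 1 - w))%C.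

Section Alg.
Variables a b c d : R.
Hypothesis Hdet : a * d - b * c = 1.
Hypothesis Hell : Rabs (a + d) < 2.

Lemma c_neq0 : c <> 0.
Proof.
  intros E. subst c. destruct (Rabs_def2 _ _ Hell) as [A1 A2]. assert (a * d = 1) by lra.
  assert (0 <= (a - d) * (a - d)) by apply Rle_0_sqr. nra.
Qed.

Lemma sq_pos : 0 < sq a d.
Proof. unfold sq. apply sqrt_lt_R0. destruct (Rabs_def2 _ _ Hell). nra. Qed.

Lemma sq_sq : sq a d * sq a d = 4 - (a + d) ^ 2.
Proof. unfold sq. apply sqrt_sqrt. destruct (Rabs_def2 _ _ Hell). nra. Qed.

Lemma y0_pos : 0 < y0 a c d.
Proof.
  unfold y0. apply Rdiv_lt_0_compat. apply sq_pos.
  pose proof (Rabs_pos_lt c c_neq0). lra.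
Qed.

Lemma cy0_sq : (c * y0 a c d) * (c * y0 a c d) = (4 - (a + d) ^ 2) / 4.
Proof.
  unfold y0. rewrite <- sq_sq.
  pose proof c_neq0 as Hc. pose proof (Rabs_pos_lt c Hc).
  assert (Rabs c * Rabs c = c * c) by (rewrite <- Rabs_mult; apply Rabs_pos_eq; nra).
  field_simplify; [|lra]. replace (Rabs c ^ 2) with (c ^ 2) by (simpl; nra). field. auto.
Qed.

Lemma f1 : (RtoC c * z0b a c d + RtoC d)%C = rho a c d.
Proof.
  pose proof c_neq0. unfold z0b, rho, x0. apply injective_projections; simpl; field; auto.
Qed.

Lemma f2 : (RtoC a - RtoC c * z0b a c d)%C = rhob a c d.
Proof.
  pose proof c_neq0. unfold z0b, rhob, x0. apply injective_projections; simpl; field; auto.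
Qed.

Lemma f3 : (rho a c d * rhob a c d)%C = RtoC 1.
Proof.
  pose proof cy0_sq. unfold rho, rhob. apply injective_projections; simpl.
  - nra.
  - ring.
Qed.

Lemma f4 : (RtoC a * z0b a c d + RtoC b)%C = (z0b a c d * rho a c d)%C.
Proof.
  pose proof c_neq0. pose proof cy0_sq as Y.
  unfold z0b, rho, x0. apply injective_projections; simpl.
  - apply (Rmult_eq_reg_l c); auto.
    assert (c * (c * y0 a c d * y0 a c d) = (4 - (a + d) ^ 2) / 4) by (rewrite <- Y; ring).
    field_simplify; auto. nra.
  - field. auto.
Qed.

Lemma f5 : (RtoC c * (z0 a c d - z0b a c d))%C = (rhob a c d - rho a c d)%C.
Proof.
  unfold z0, z0b, rho, rhob. apply injective_projections; simpl; ring.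
Qed.

Lemma rho_neq0 : rho a c d <> RtoC 0.
Proof. intro H. pose proof f3. rewrite H, Cmult_0_l in H0. apply C1_nz. auto. Qed.

Lemma rhob_inv : rhob a c d = Cinv (rho a c d).
Proof.
  pose proof rho_neq0. pose proof f3.
  replace (rhob a c d) with (/ rho a c d * (rho a c d * rhob a c d))%C by (field; auto).
  rewrite H0. ring.
Qed.

Lemma Cmod_rho : Cmod (rho a c d) = 1.
Proof.
  pose proof cy0_sq. unfold Cmod, rho; simpl.
  replace ((a + d) / 2 * ((a + d) / 2 * 1) + - c * y0 a c d * (- c * y0 a c d * 1)) with 1 by nra.
  apply sqrt_1.
Qed.

Lemma rho_minus_rhob : (rho a c d - rhob a c d)%C <> RtoC 0.
Proof.
  intro H. apply (f_equal snd) in H. unfold rho, rhob in H; simpl in H.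
  pose proof c_neq0. pose proof y0_pos. nra.
Qed.

Lemma D_eq : (z0 a c d - z0b a c d)%C = ((rhob a c d - rho a c d) / RtoC c)%C.
Proof.
  pose proof c_neq0 as Hc. rewrite <- f5. field. intro X. apply Hc. apply (f_equal fst) in X. simpl in X. auto.
Qed.

End Alg.

Section Alg2.
Variables a b c d : R.
Hypothesis Hdet : a * d - b * c = 1.
Hypothesis Hell : Rabs (a + d) < 2.

Lemma Cmod_sq (z : C) : Cmod z * Cmod z = fst z * fst z + snd z * snd z.
Proof.
  unfold Cmod. rewrite sqrt_sqrt. simpl; ring. destruct z; simpl. nra.
Qed.

Lemma one_minus_neq0 (w : C) : Cmod w < 1 -> (RtoC 1 - w)%C <> RtoC 0.
Proof.
  intros Hw E. assert (w = RtoC 1) by (apply Ceq_minus in E; auto).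
  rewrite H, Cmod_1 in Hw. lra.
Qed.

Lemma Zm_in_H (w : C) : Cmod w < 1 -> in_H (Zm a c d w).
Proof.
  intros Hw. unfold in_H.
  pose proof (Cmod_sq w) as S. pose proof (Cmod_ge_0 w).
  assert (Hw2 : fst w * fst w + snd w * snd w < 1) by nra.
  pose proof (y0_pos a b c d Hdet Hell) as Y.
  destruct w as [p q]. simpl in Hw2.
  unfold Zm, z0, z0b, Cdiv, Cinv, Cmult, Cplus, Cminus, Copp, RtoC, Im; simpl.
  assert (U : 0 < (1 + - p) * (1 + - p) + (0 + - q) * (0 + - q)) by nra.
  set (u := (1 + - p) * (1 + - p) + (0 + - q) * (0 + - q)) in *.
  replace (1 + - p) with (1 - p) by ring. replace (0 + - q) with (- q) by ring.
  replace ((1 - p) * (1 - p) + - q * - q) with u by (unfold u; ring).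
  apply (Rmult_lt_reg_r u); auto. rewrite Rmult_0_l.
  assert (Ev : (1 - p) * ((1 - p) * 1) + - q * (- q * 1) = u) by (unfold u; ring). rewrite Ev.
  match goal with |- 0 < ?X => replace X with (y0 a c d * (1 - p * p - q * q)) end.
  apply Rmult_lt_0_compat; lra.
  unfold u in *. field. lra.
Qed.

Lemma J_eq (w : C) : Cmod w < 1 ->
  (RtoC c * Zm a c d w + RtoC d)%C = ((rhob a c d - rho a c d * w) / (RtoC 1 - w))%C.
Proof.
  intros Hw. pose proof (one_minus_neq0 w Hw).
  unfold Zm.
  replace (RtoC c * (z0b a c d + (z0 a c d - z0b a c d) / (RtoC 1 - w)) + RtoC d)%C
    with ((RtoC c * z0b a c d + RtoC d) + (RtoC c * (z0 a c d - z0b a c d)) / (RtoC 1 - w))%C by (field; auto).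
  rewrite (f1 a b c d Hdet Hell), f5. field. auto.
Qed.

Lemma rho2w (w : C) : Cmod w < 1 -> Cmod (rho a c d * rho a c d * w)%C < 1.
Proof. intros Hw. rewrite !Cmod_mult, (Cmod_rho a b c d Hdet Hell). lra. Qed.

Lemma mob_Zm (w : C) : Cmod w < 1 ->
  mobius (Mat2 a b c d) (Zm a c d w) = Zm a c d (rho a c d * rho a c d * w)%C.
Proof.
  intros Hw.
  pose proof (one_minus_neq0 w Hw) as N1.
  pose proof (one_minus_neq0 _ (rho2w w Hw)) as N2.
  pose proof (rho_neq0 a b c d Hdet Hell) as Nr.
  pose proof (c_neq0 a b c d Hdet Hell) as Nc.
  assert (NcC : RtoC c <> RtoC 0) by (intro X; apply Nc; apply (f_equal fst) in X; auto).
  unfold mobius. cbn [ma mb mc md].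
  rewrite J_eq by auto.
  assert (Ea : RtoC a = (rhob a c d + RtoC c * z0b a c d)%C) by (rewrite <- (f2 a b c d Hdet Hell); ring).
  assert (Eb : RtoC b = (z0b a c d * rho a c d - RtoC a * z0b a c d)%C) by (rewrite <- (f4 a b c d Hdet Hell); ring).
  rewrite Eb. rewrite Ea.
  rewrite (rhob_inv a b c d Hdet Hell).
  unfold Zm. rewrite (D_eq a b c d Hdet Hell). rewrite (rhob_inv a b c d Hdet Hell).
  assert (N3 : (/ rho a c d - rho a c d * w)%C <> RtoC 0).
  { replace (/ rho a c d - rho a c d * w)%C with (/ rho a c d * (RtoC 1 - rho a c d * rho a c d * w))%C by (field; auto).
    apply Cmult_neq_0; auto. intro X. apply C1_nz. rewrite <- (Cinv_l (rho a c d)) by auto. rewrite X. ring. }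
  field. repeat split; auto.
Qed.

End Alg2.

Fixpoint cheb (t : R) (n : nat) : R * R :=
  match n with
  | O => (0, -1)
  | S n => (t * fst (cheb t n) - snd (cheb t n), fst (cheb t n))
  end.

Section Alg3.
Variables a b c d : R.
Hypothesis Hdet : a * d - b * c = 1.
Hypothesis Hell : Rabs (a + d) < 2.

Lemma Zm_surj (z : C) : in_H z -> exists w, Cmod w < 1 /\ Zm a c d w = z.
Proof.
  intros Hz. unfold in_H in Hz.
  pose proof (y0_pos a b c d Hdet Hell) as Y.
  assert (N1 : (z - z0b a c d)%C <> RtoC 0).
  { intro X. apply (f_equal snd) in X. unfold z0b in X; simpl in X. unfold Im in Hz. lra. }
  assert (ND : (z0 a c d - z0b a c d)%C <> RtoC 0).
  { intro X. apply (f_equal snd) in X. unfold z0, z0b in X; simpl in X. lra. }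
  exists ((z - z0 a c d) / (z - z0b a c d))%C. split.
  - unfold Cdiv. rewrite Cmod_mult, Cmod_inv by auto.
    assert (Hlt : Cmod (z - z0 a c d)%C < Cmod (z - z0b a c d)%C).
    { pose proof (Cmod_sq (z - z0 a c d)%C). pose proof (Cmod_sq (z - z0b a c d)%C).
      pose proof (Cmod_ge_0 (z - z0 a c d)%C). pose proof (Cmod_ge_0 (z - z0b a c d)%C).
      destruct z as [x y]. unfold z0, z0b, Im in *. simpl in *. nra. }
    pose proof (Cmod_ge_0 (z - z0 a c d)%C).
    assert (0 < Cmod (z - z0b a c d)%C) by (apply Cmod_gt_0; auto).
    apply (Rmult_lt_reg_r (Cmod (z - z0b a c d)%C)); auto.
    rewrite Rmult_assoc, Rinv_l by lra. lra.
  - unfold Zm.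
    replace (RtoC 1 - (z - z0 a c d) / (z - z0b a c d))%C with ((z0 a c d - z0b a c d) / (z - z0b a c d))%C by (field; auto).
    field. auto.
Qed.

Lemma mat_pow_cheb (n : nat) :
  mat2_pow (Mat2 a b c d) n =
  Mat2 (fst (cheb (a + d) n) * a - snd (cheb (a + d) n)) (fst (cheb (a + d) n) * b)
       (fst (cheb (a + d) n) * c) (fst (cheb (a + d) n) * d - snd (cheb (a + d) n)).
Proof.
  pose proof (c_neq0 a b c d Hdet Hell) as Hc.
  assert (Eb : b = (a * d - 1) / c) by (field_simplify; [|auto]; apply (Rmult_eq_reg_l c); [field_simplify; lra|auto]; auto).
  induction n.
  - simpl. unfold mat2_id. f_equal; ring.
  - simpl mat2_pow. rewrite IHn. unfold mat2_mul. cbn [ma mb mc md cheb fst snd].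
    set (x := fst (cheb (a + d) n)). set (y := snd (cheb (a + d) n)).
    rewrite Eb. f_equal; field; auto.
Qed.

Lemma t_eq : RtoC (a + d) = (rho a c d + rhob a c d)%C.
Proof. unfold rho, rhob. apply injective_projections; simpl; field. Qed.

Lemma cheb_C (n : nat) :
  ((rho a c d - rhob a c d) * RtoC (fst (cheb (a + d) n)) = pow_n (rho a c d) n - pow_n (rhob a c d) n)%C /\
  ((rho a c d - rhob a c d) * RtoC (snd (cheb (a + d) n)) = rhob a c d * pow_n (rho a c d) n - rho a c d * pow_n (rhob a c d) n)%C.
Proof.
  pose proof (f3 a b c d Hdet Hell) as F3.
  induction n.
  - cbn [cheb fst snd]. rewrite !pow_n_O. split; [ring|]. apply injective_projections; simpl; ring.
  - destruct IHn as [I1 I2]. cbn [cheb fst snd].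
    rewrite !pow_n_S. split.
    + rewrite RtoC_minus, RtoC_mult, t_eq.
      transitivity ((rho a c d + rhob a c d) * ((rho a c d - rhob a c d) * RtoC (fst (cheb (a + d) n)))
         - (rho a c d - rhob a c d) * RtoC (snd (cheb (a + d) n)))%C; [ring|].
      rewrite I1, I2. ring.
    + rewrite I1.
      transitivity ((rho a c d * rhob a c d) * (pow_n (rho a c d) n - pow_n (rhob a c d) n))%C.
      rewrite F3. ring. ring.
Qed.

Lemma rho_not_root : infinite_order (Mat2 a b c d) -> forall m, (0 < m)%nat -> pow_n (rho a c d) m <> RtoC 1.
Proof.
  intros Hinf m Hm Hr.
  pose proof (rho_minus_rhob a b c d Hdet Hell) as Nd.
  assert (Hrb : pow_n (rhob a c d) m = RtoC 1).
  { rewrite (rhob_inv a b c d Hdet Hell), pow_n_inv by (apply (rho_neq0 a b c d Hdet Hell)).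
    rewrite Hr. cfield. }
  destruct (cheb_C m) as [C1 C2].
  rewrite Hr, Hrb in C1, C2.
  assert (X : RtoC (fst (cheb (a + d) m)) = RtoC 0).
  { apply (Cmult_reg_l _ _ _ Nd). rewrite C1. ring. }
  assert (Y : RtoC (snd (cheb (a + d) m)) = RtoC (-1)).
  { apply (Cmult_reg_l _ _ _ Nd). rewrite C2. apply injective_projections; simpl; ring. }
  apply (f_equal fst) in X. apply (f_equal fst) in Y. simpl in X, Y.
  apply (Hinf m Hm). rewrite mat_pow_cheb. rewrite X, Y. unfold mat2_id. f_equal; ring.
Qed.

End Alg3.

Lemma Rpower_1_base (x : R) : Rpower 1 x = 1.
Proof. unfold Rpower. rewrite ln_1, Rmult_0_r, exp_0. reflexivity. Qed.

Lemma iter_pow (F : C -> C) (s m : C) : Cmod s = 1 ->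
  (forall w, Cmod w < 1 -> F (s * w)%C = (m * F w)%C) ->
  forall n w, Cmod w < 1 -> F (pow_n s n * w)%C = (pow_n m n * F w)%C.
Proof.
  intros Hs H. induction n; intros w Hw.
  - rewrite !pow_n_O, !Cmult_1_l. reflexivity.
  - rewrite !pow_n_S. replace (s * pow_n s n * w)%C with (s * (pow_n s n * w))%C by ring.
    rewrite H. rewrite IHn by auto. ring.
    rewrite Cmod_mult, Cmod_pow_n, Hs, pow1. lra.
Qed.

Lemma E_eq_diff (x y : R) : E x = E y -> E (x - y) = RtoC 1.
Proof.
  intros H. unfold Rminus. rewrite E_add, E_opp, H. field. apply E_neq0.
Qed.

Lemma CDx_ext (f g : C -> C) (z : C) : (forall y, f y = g y) -> CDx f z -> CDx g z.
Proof. intros E [l H]. exists l. eapply CD_ext; eauto. Qed.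
Lemma CDx_const (a z : C) : CDx (fun _ => a) z.
Proof. eexists. apply CD_const. Qed.
Lemma CDx_id (z : C) : CDx (fun y => y) z.
Proof. eexists. apply CD_id. Qed.
Lemma CDx_plus (f g : C -> C) (z : C) : CDx f z -> CDx g z -> CDx (fun y => f y + g y)%C z.
Proof. intros [l1 H1] [l2 H2]. eexists. apply CD_plus; eauto. Qed.
Lemma CDx_scal (c : C) (f : C -> C) (z : C) : CDx f z -> CDx (fun y => c * f y)%C z.
Proof. intros [l1 H1]. eexists. apply CD_scal; eauto. Qed.
Lemma CDx_mult (f g : C -> C) (z : C) : CDx f z -> CDx g z -> CDx (fun y => f y * g y)%C z.
Proof. intros [l1 H1] [l2 H2]. eexists. apply CD_mult; eauto. Qed.
Lemma CDx_comp (f g : C -> C) (z : C) : CDx g z -> CDx f (g z) -> CDx (fun y => f (g y)) z.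
Proof. intros [l1 H1] [l2 H2]. eexists. apply CD_comp; eauto. Qed.

Lemma CDx_inv_one_minus (w : C) : (RtoC 1 - w)%C <> RtoC 0 -> CDx (fun y => Cinv (RtoC 1 - y)) w.
Proof.
  intros Hw. apply (CDx_comp Cinv (fun y => RtoC 1 - y)%C).
  - apply CDx_ext with (f := fun y => (RtoC 1 + RtoC (-1) * y)%C).
    { intros y. apply injective_projections; simpl; ring. }
    apply CDx_plus. apply CDx_const. apply CDx_scal. apply CDx_id.
  - eexists. apply CD_inv. auto.
Qed.

Theorem lemma4p2 (k : nat) (h : C -> C) (M : mat2) (zeta : C) :
  (0 < k)%nat ->
  holomorphic_on_H h ->
  in_SL2R M -> elliptic M -> infinite_order M ->
  zeta <> RtoC 0 -> root_of_unity zeta ->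
  (forall z : C, in_H z -> slash k h M z = Cmult zeta (h z)) ->
  forall z : C, in_H z -> h z = RtoC 0.
Proof.
  intros Hk Hh Hsl Hel Hinf Hz0 [N [HN HzN]] Hrel.
  destruct M as [a b c d].
  unfold in_SL2R, mat2_det in Hsl. unfold elliptic, mat2_tr in Hel. cbn [ma mb mc md] in Hsl, Hel.
  set (F := fun w => (pow_n (Cinv (RtoC 1 - w)) k * h (Zm a c d w))%C).
  assert (HF : forall w, Cmod w < 1 -> @ex_derive C_AbsRing C_NormedModule F w).
  { intros w Hw.
    assert (CF : CDx F w).
    { apply CDx_mult.
      - apply (CDx_pow (fun y => Cinv (RtoC 1 - y))). apply CDx_inv_one_minus. apply one_minus_neq0; auto.
      - apply (CDx_comp h (Zm a c d)).
        + unfold Zm. apply CDx_plus. apply CDx_const. apply CDx_scal.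
          apply CDx_inv_one_minus. apply one_minus_neq0; auto.
        + destruct (Hh _ (Zm_in_H a b c d Hsl Hel w Hw)) as [l Hl].
          exists l. apply is_derive_CD. exact Hl. }
    destruct CF as [l Hl]. exists l. apply CD_is_derive. exact Hl. }
  set (rh := rho a c d). set (rb := rhob a c d).
  assert (Hrel2 : forall w, Cmod w < 1 -> F (rh * rh * w)%C = ((zeta * pow_n rb k) * F w)%C).
  { intros w Hw.
    pose proof (Hrel _ (Zm_in_H a b c d Hsl Hel w Hw)) as R.
    unfold slash, mat2_det in R. cbn [ma mb mc md] in R.
    rewrite Hsl, Rpower_1_base in R.
    rewrite (J_eq a b c d Hsl Hel w Hw), (mob_Zm a b c d Hsl Hel w Hw) in R.
    fold rh rb in R.
    pose proof (one_minus_neq0 w Hw) as N1.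
    pose proof (one_minus_neq0 _ (rho2w a b c d Hsl Hel w Hw)) as N2. fold rh in N2.
    pose proof (rho_neq0 a b c d Hsl Hel) as Nr. fold rh in Nr.
    assert (Erb : rb = Cinv rh) by (apply (rhob_inv a b c d Hsl Hel)).
    assert (NJ : ((rb - rh * w) / (RtoC 1 - w))%C <> RtoC 0).
    { rewrite Erb. replace (/ rh - rh * w)%C with (/ rh * (RtoC 1 - rh * rh * w))%C by (field; auto).
      unfold Cdiv. apply Cmult_neq_0; [apply Cmult_neq_0|].
      - intro X. apply C1_nz. rewrite <- (Cinv_l rh) by auto. rewrite X. ring.
      - auto.
      - intro X. apply C1_nz. rewrite <- (Cinv_l (RtoC 1 - w)) by auto. rewrite X. ring. }
    assert (Hhz : h (Zm a c d (rh * rh * w)%C) = (zeta * h (Zm a c d w) * pow_n ((rb - rh * w) / (RtoC 1 - w)) k)%C).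
    { rewrite <- R. field. apply pow_n_neq0. auto. }
    unfold F. rewrite Hhz.
    transitivity (zeta * h (Zm a c d w) * pow_n (/ (RtoC 1 - rh * rh * w) * ((rb - rh * w) / (RtoC 1 - w))) k)%C.
    { rewrite pow_n_mult_distr. ring. }
    replace (/ (RtoC 1 - rh * rh * w) * ((rb - rh * w) / (RtoC 1 - w)))%C with (rb * / (RtoC 1 - w))%C.
    rewrite pow_n_mult_distr. ring.
    rewrite Erb. field. auto. }
  destruct (unit_E rh (Cmod_rho a b c d Hsl Hel)) as [al Hal].
  assert (Hrb : rb = E (- al)) by (rewrite E_opp, <- Hal; apply (rhob_inv a b c d Hsl Hel)).
  set (beta := INR N * (al + al)).
  set (gamma := INR (k * N) * (- al)).
  assert (Hs : Cmod (rh * rh)%C = 1) by (rewrite Cmod_mult, Hal, Cmod_E; ring).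
  assert (H1 : forall w, Cmod w < 1 -> F (E beta * w)%C = (E gamma * F w)%C).
  { intros w Hw. pose proof (iter_pow F (rh * rh)%C (zeta * pow_n rb k)%C Hs Hrel2 N w Hw) as X.
    rewrite Hal, <- E_add, E_pow in X. fold beta in X. rewrite X. f_equal.
    rewrite pow_n_mult_distr, HzN, <- pow_n_mul, Hrb, E_pow. unfold gamma. rewrite mult_INR.
    rewrite Cmult_1_l. f_equal. }
  assert (Hroot := rho_not_root a b c d Hsl Hel Hinf). fold rh in Hroot.
  assert (H2 : forall n, (0 < n)%nat -> E (INR n * beta) <> RtoC 1).
  { intros n Hn. replace (INR n * beta) with (INR (n * N * 2) * al).
    rewrite <- E_pow, <- Hal. apply Hroot. lia.
    unfold beta. rewrite !mult_INR. simpl. ring. }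
  assert (H3 : forall n : nat, E (INR n * beta) <> E gamma).
  { intros n X. apply E_eq_diff in X.
    replace (INR n * beta - gamma) with (INR (n * N * 2 + k * N) * al) in X.
    rewrite <- E_pow, <- Hal in X. revert X. apply Hroot. nia.
    unfold beta, gamma. rewrite plus_INR, !mult_INR. simpl. ring. }
  pose proof (core F beta gamma HF H1 H2 H3) as HF0.
  intros z Hz.
  destruct (Zm_surj a b c d Hsl Hel z Hz) as [w [Hw Ew]].
  specialize (HF0 w Hw). unfold F in HF0. rewrite Ew in HF0.
  apply (Cmult_reg_l _ _ (pow_n (Cinv (RtoC 1 - w)) k)).
  - apply pow_n_neq0. intro X. apply C1_nz. rewrite <- (Cinv_l (RtoC 1 - w)) by (apply one_minus_neq0; auto).
    rewrite X. ring.
  - rewrite HF0. ring.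
Qed.
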